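(* For every allocation $\mathcal{E}=(E_1,\dots,E_M)\in\mathfrak{E}$ let $V(\mathcal{E})$ denote the optimal value of the parametric problem $\mathcal{P}(\mathcal{E})$ described in the context. Then $V$ is convex on $\mathfrak{E}$: for all $\lambda\in[0,1]$ and all $\mathcal{E}_1,\mathcal{E}_2\in\mathfrak{E}$, $V(\lambda\mathcal{E}_1+(1-\lambda)\mathcal{E}_2)\le\lambda V(\mathcal{E}_1)+(1-\lambda)V(\mathcal{E}_2)$.
   Context: Data: integers $N\ge1$, $M\ge1$, $T>0$, $E>0$, constants $\alpha>0,\beta$, $L<U$, $x_{i0}\in[L,U]$ ($i\in[N]:=\{1,\dots,N\}$), a price $\pi:[0,T]\to\mathbb{R}$, a constant ambient temperature $\hat{x}>U$. Let $0=\tau_0<\tau_1<\dots<\tau_M=T$ be the partition of $[0,T]$ into the subintervals on which $\pi$ is monotone, $T_j:=\tau_j-\tau_{j-1}$. Let $\overline{u}:=\frac\alpha\beta(\hat{x}-U)$, $\underline{u}:=\frac\alpha\beta(\hat{x}-L)$, $t^0:=\frac1\alpha\log\frac{\hat{x}-L}{\hat{x}-U}$, $t^1:=\frac1\alpha\log\frac{U-\hat{x}+\beta/\alpha}{L-\hat{x}+\beta/\alpha}$, $\overline{E}_j:=N\overline{u}[T_j-t^0]^+$, $\underline{E}_j:=N\{\min(t^1,T_j)+\underline{u}[T_j-t^1]^+\}$, where $[s]^+=\max\{0,s\}$. The admissible allocations are $\mathfrak{E}:=\{(E_1,\dots,E_M)\in\mathbb{R}^M_+:\sum_jE_j=E,\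 E_j\in[\overline{E}_j,\underline{E}_j]\ \forall j\}$. Problem $\mathcal{P}(\mathcal{E})$: over measurable $u_i:[0,T]\to[0,1]$, minimize $J(\mathbf{u})=\int_0^T\pi(t)\sum_{i=1}^Nu_i(t)dt$ subject to $\dot{x}_i=-\alpha(x_i-\hat{x})-\beta u_i$ a.e., $x_i(0)=x_{i0}$, $L\le x_i(t)\le U$ for all $t$ ($i\in[N]$), $\dot{x}_{N+1}=\sum_iu_i$ a.e., $x_{N+1}(0)=0$, and $x_{N+1}(\tau_j)=E_1+\dots+E_j$ for $j=1,\dots,M$. $V(\mathcal{E})$ is the minimum (infimum) of $J$ over feasible controls. *)

(* Defs.v *)
From HB Require Import structures.
From mathcomp Require Import all_boot all_order all_algebra.
From mathcomp Require Import all_classical all_reals all_analysis.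
Unset Printing Implicit Defensive.
Import Order.TTheory GRing.Theory Num.Theory.
Import numFieldNormedType.Exports.
Local Open Scope classical_set_scope.
Local Open Scope ring_scope.

Section Defs.
Context {R : realType}.
Local Notation mu := (@lebesgue_measure R).

(* Indices j = 1..M of the paper are j : 'I_M (paper index j+1);
   the partition points are tau 0, ..., tau M. *)

(* A feasible control for P(Ealloc): measurable u_i : [0,T] -> [0,1],
   with an (absolutely continuous / Caratheodory) state x_i given in integral
   form, staying in [L,U], and the energy state x_{N+1}(t) = int_0^t sum_i u_i
   meeting the cumulative targets at tau_1, ..., tau_M. *)
Definition feasible (N M : nat) (T alpha beta L U xhat : R)
    (x0 : 'I_N -> R) (tau : nat -> R) (Ealloc : 'I_M -> R)
    (u : 'I_N -> R -> R) : Prop :=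
  (forall i, measurable_fun `[0, T] (u i)) /\
  (forall i t, t \in `[0, T] -> 0 <= u i t <= 1) /\
  (exists x : 'I_N -> R -> R,
     (forall i, {within `[0, T], continuous (x i)}) /\
     (forall i t, t \in `[0, T] ->
        (x i t)%:E = (x0 i)%:E +
          (\int[mu]_(s in `[0%R, t]) (- alpha * (x i s - xhat) - beta * u i s)%:E)%E) /\
     (forall i t, t \in `[0, T] -> L <= x i t <= U)) /\
  (forall j : 'I_M,
     (\int[mu]_(s in `[0%R, tau j.+1]) (\sum_(i < N) u i s)%:E)%E
       = (\sum_(k < M | (k <= j)%N) Ealloc k)%:E).

Definition cost (N : nat) (T : R) (pi : R -> R) (u : 'I_N -> R -> R) : \bar R :=
  (\int[mu]_(t in `[0%R, T]) (pi t * \sum_(i < N) u i t)%:E)%E.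

Definition value (N M : nat) (T alpha beta L U xhat : R)
    (x0 : 'I_N -> R) (pi : R -> R) (tau : nat -> R) (Ealloc : 'I_M -> R) : \bar R :=
  ereal_inf [set z | exists u, feasible N M T alpha beta L U xhat x0 tau Ealloc u
                              /\ z = cost N T pi u].

Definition posp (s : R) : R := Num.max 0 s.

Definition ubar (alpha beta U xhat : R) : R := alpha / beta * (xhat - U).
Definition uund (alpha beta L xhat : R) : R := alpha / beta * (xhat - L).
Definition t0 (alpha L U xhat : R) : R := ln ((xhat - L) / (xhat - U)) / alpha.
Definition t1 (alpha beta L U xhat : R) : R :=
  ln ((U - xhat + beta / alpha) / (L - xhat + beta / alpha)) / alpha.

Definition Tlen (M : nat) (tau : nat -> R) (j : 'I_M) : R := tau j.+1 - tau j.

Definition Elow (N M : nat) (alpha beta L U xhat : R) (tau : nat -> R) (j : 'I_M) : R :=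
  N%:R * ubar alpha beta U xhat * posp (Tlen M tau j - t0 alpha L U xhat).

Definition Eup (N M : nat) (alpha beta L U xhat : R) (tau : nat -> R) (j : 'I_M) : R :=
  N%:R * (Num.min (t1 alpha beta L U xhat) (Tlen M tau j)
          + uund alpha beta L xhat * posp (Tlen M tau j - t1 alpha beta L U xhat)).

Definition admissible (N M : nat) (Etot alpha beta L U xhat : R) (tau : nat -> R)
    (Ealloc : 'I_M -> R) : Prop :=
  (forall j, 0 <= Ealloc j) /\ \sum_(j < M) Ealloc j = Etot /\
  (forall j, Elow N M alpha beta L U xhat tau j <= Ealloc j
             <= Eup N M alpha beta L U xhat tau j).

End Defs.

(* Main.v *)
Require Import Defs.
From HB Require Import structures.
From mathcomp Require Import all_boot all_order all_algebra.
From mathcomp Require Import all_classical all_reals all_analysis.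
From mathcomp Require Import ring lra measurable_realfun.
Import Order.TTheory GRing.Theory Num.Theory.
Import numFieldNormedType.Exports.
Local Open Scope classical_set_scope.
Local Open Scope ring_scope.

Section H.
Context {R : realType}.
Local Notation mu := (@lebesgue_measure R).

Lemma int_lin (D : set R) (mD : measurable D) (f g : R -> R) (a b : R) :
  mu.-integrable D (EFin \o f) -> mu.-integrable D (EFin \o g) ->
  (\int[mu]_(x in D) (a * f x + b * g x)%:E =
   a%:E * \int[mu]_(x in D) (f x)%:E + b%:E * \int[mu]_(x in D) (g x)%:E)%E.
Proof.
move=> If Ig.
under eq_integral do rewrite EFinD !EFinM.
rewrite integralD//; [|exact: integrableZl|exact: integrableZl].
by rewrite !integralZl.
Qed.

Lemma bdd_int (a b C : R) (f : R -> R) :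
  measurable_fun `[a, b] f -> (forall x, x \in `[a, b] -> `|f x| <= C) ->
  mu.-integrable `[a, b] (EFin \o f).
Proof.
move=> mf bf; apply: measurable_bounded_integrable => //.
  have := @lebesgue_measure_itv R `[a, b]; rewrite /= => ->.
  by case: ifP => _; rewrite ?ltry// -EFinD ltry.
exists C; split; first by rewrite num_real.
move=> M CM x Ax; apply: le_trans (ltW CM); exact: bf.
Qed.


Lemma tau_mono (M : nat) (tau : nat -> R) :
  (forall j, (j < M)%N -> tau j < tau j.+1) ->
  forall j k, (j <= k <= M)%N -> tau j <= tau k.
Proof.
move=> inc j k /andP[jk kM]; elim: k jk kM => [|k IH] jk kM.
  by rewrite leqn0 in jk; rewrite (eqP jk).
rewrite leq_eqVlt in jk; case/orP: jk => [/eqP->//|jk].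
apply: le_trans (IH jk (ltnW kM)) (ltW (inc k kM)).
Qed.

Lemma find_piece (M : nat) (tau : nat -> R) t :
  (forall j, (j < M)%N -> tau j < tau j.+1) ->
  forall k, (0 < k <= M)%N -> t \in `[tau 0%N, tau k] ->
  exists j, (j < k)%N /\ t \in `[tau j, tau j.+1].
Proof.
move=> inc; elim=> [|k IH] // /andP[_ kM] tk.
have [tle|tgt] := leP t (tau k).
  case: k IH kM tk tle => [|k] IH kM tk tle.
    by exists 0%N; split.
  have tk' : t \in `[tau 0%N, tau k.+1].
    by move: tk; rewrite !in_itv /= => /andP[-> _].
  have [j [jk tj]] := IH (ltnW kM) tk'.
  by exists j; split => //; exact: ltnW.
exists k; split => //; move: tk; rewrite !in_itv /= => /andP[_ ->].
by rewrite (ltW tgt).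
Qed.

Lemma clamp_mono_meas (a b : R) (pi : R -> R) : a <= b ->
  ({in `[a, b] &, {homo pi : s t / s <= t}} \/
   {in `[a, b] &, {homo pi : s t / t <= s}}) ->
  measurable_fun `[a, b] pi.
Proof.
move=> ab hm.
pose c t := Num.max a (Num.min t b).
have cin t : c t \in `[a, b].
  rewrite in_itv /= /c le_max lexx /= ge_max ab /= ge_min lexx orbT.
  by [].
have cid t : t \in `[a, b] -> c t = t.
  rewrite in_itv /= /c => /andP[aT tb].
  by rewrite (min_idPl tb) (max_idPr aT).
have cmono s t : s <= t -> c s <= c t.
  move=> st; rewrite /c.
  by apply: le_max2 => //; apply: le_min2.
apply: (@eq_measurable_fun _ _ _ _ _ (pi \o c)).
  by move=> t /set_mem tin /=; rewrite cid.
have {}hm : {in `[a, b] &, {homo pi : s t / s <= t}}.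
  by case: hm => // h s t sin tin st; exact: (h t s).

apply: nondecreasing_measurable => // s t st /=.
by apply: hm => //; apply: cmono.
Qed.

Definition homo_hyp (M : nat) (tau : nat -> R) (pi : R -> R) :=
  forall j, (j < M)%N ->
     {in `[tau j, tau j.+1] &, {homo pi : s t / s <= t}} \/
     {in `[tau j, tau j.+1] &, {homo pi : s t / t <= s}}.

Lemma homo_up (a b : R) (pi : R -> R) :
  ({in `[a, b] &, {homo pi : s t / s <= t}} \/
   {in `[a, b] &, {homo pi : s t / t <= s}}) ->
  {in `[a, b] &, {homo pi : s t / s <= t}}.
Proof. by case=> // h s t sin tin st; exact: (h t s). Qed.

Lemma pi_meas (M : nat) (tau : nat -> R) (pi : R -> R) :
  (forall j, (j < M)%N -> tau j < tau j.+1) -> homo_hyp M tau pi ->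
  forall k, (k <= M)%N -> measurable_fun `[tau 0%N, tau k] pi.
Proof.
move=> inc hh; elim=> [|k IH] kM.
  apply: clamp_mono_meas => //; left => s t.
  rewrite !in_itv /= => /andP[s1 s2] /andP[t1 t2] _.
  have -> : s = t by lra.
  by [].
have e : `[tau 0%N, tau k.+1]%classic = `[tau 0%N, tau k]%classic `|` `[tau k, tau k.+1]%classic :> set R.
  have h0 := @tau_mono M tau inc 0%N k (ltnW kM).
  have h1 := inc k kM.
  apply/seteqP; split => x /=; rewrite !in_itv /=.
    move=> /andP[x1 x2]; have [xk|xk] := leP x (tau k).
      by left; apply/andP; split.
    by right; apply/andP; split => //; exact: ltW.
  case=> /andP[x1 x2]; apply/andP; split; lra.
rewrite e; apply/measurable_funU => //; split; first exact: IH (ltnW kM).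
apply: clamp_mono_meas; [exact: ltW (inc k kM)| exact: hh].
Qed.

Lemma pi_bound (M : nat) (tau : nat -> R) (pi : R -> R) :
  (0 < M)%N ->
  (forall j, (j < M)%N -> tau j < tau j.+1) -> homo_hyp M tau pi ->
  forall t, t \in `[tau 0%N, tau M] ->
  `|pi t| <= \sum_(j < M) (`|pi (tau j)| + `|pi (tau j.+1)|).
Proof.
move=> M0 inc hh t tin.
have [j [jM tj]] := @find_piece M tau t inc M (ltac:(by rewrite M0 leqnn)) tin.
have h := @homo_up _ _ pi (hh j jM).
have lo : pi (tau j) <= pi t.
  apply: h => //; last by move: tj; rewrite in_itv /= => /andP[].
  by rewrite in_itv /= lexx ltW // inc.
have hi : pi t <= pi (tau j.+1).
  apply: h => //; last by move: tj; rewrite in_itv /= => /andP[].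
  by rewrite in_itv /= lexx ltW // inc.
apply: le_trans (_ : `|pi (tau j)| + `|pi (tau j.+1)| <= _).
  have := ler_norm (pi (tau j.+1)); have := ler_norm (- pi (tau j)).
  have := normr_ge0 (pi (tau j)); have := normr_ge0 (pi (tau j.+1)).
  rewrite normrN ler_norml => ????; apply/andP; split; lra.
by rewrite (bigD1 (Ordinal jM)) //= lerDl sumr_ge0.
Qed.


Lemma cont_mix (A : set R) (f g : R -> R) (a b : R) :
  {within A, continuous f} -> {within A, continuous g} ->
  {within A, continuous (fun t => a * f t + b * g t)}.
Proof.
move=> cf cg t.
apply: (@continuousD _ _ _ (fun t => a * from_subspace A f t) (fun t => b * from_subspace A g t)).
  apply: continuousM; [exact: cst_continuous | exact: cf].
apply: continuousM; [exact: cst_continuous | exact: cg].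
Qed.

Lemma cont_meas (T : R) (f : R -> R) :
  {within `[0, T], continuous f} -> measurable_fun `[0, T] f.
Proof.
move=> cf; exact: (subspace_continuous_measurable_fun _ cf).
Qed.

Lemma itv_sub {T t : R} : t <= T -> (`[0, t]%classic : set R) `<=` `[0, T]%classic.
Proof.
move=> tT x /=; rewrite !in_itv /= => /andP[x0 xt].
by rewrite x0 (le_trans xt tT).
Qed.


Lemma feas_mix (N M : nat) (T alpha beta L U xhat : R) (x0 : 'I_N -> R)
  (tau : nat -> R) (E1 E2 : 'I_M -> R) (lam : R) (u1 u2 : 'I_N -> R -> R) :
  0 <= lam <= 1 -> (forall j, (j < M)%N -> tau j.+1 <= T) ->
  feasible N M T alpha beta L U xhat x0 tau E1 u1 ->
  feasible N M T alpha beta L U xhat x0 tau E2 u2 ->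
  feasible N M T alpha beta L U xhat x0 tau (fun j => (lam * E1 j + (1 - lam) * E2 j)%R)
    (fun i t => lam * u1 i t + (1 - lam) * u2 i t).
Proof.
move=> /andP[l0 l1] tauT [m1 [b1 [[x1 [c1 [d1 l1']]] e1]]] [m2 [b2 [[x2 [c2 [d2 l2']]] e2]]].
have mu_mix (u v : R -> R) (D : set R) : measurable_fun D u -> measurable_fun D v ->
   measurable_fun D (fun t => lam * u t + (1 - lam) * v t).
  move=> mu mv; apply: measurable_funD; apply: measurable_funM => //;
  exact: measurable_cst.
split; first by move=> i; apply: mu_mix.
split.
  move=> i t tin; have /andP[p1 q1] := b1 i t tin; have /andP[p2 q2] := b2 i t tin.
  apply/andP; split; nra.
split.
  exists (fun i t => lam * x1 i t + (1 - lam) * x2 i t); split.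
    by move=> i; apply: cont_mix.
  split; last first.
    move=> i t tin; have /andP[p1 q1] := l1' i t tin; have /andP[p2 q2] := l2' i t tin.
    apply/andP; split; nra.
  move=> i t tin.
  have tT : t <= T by move: tin; rewrite in_itv /= => /andP[].
  pose f1 s := - alpha * (x1 i s - xhat) - beta * u1 i s.
  pose f2 s := - alpha * (x2 i s - xhat) - beta * u2 i s.
  have mf (x u : 'I_N -> R -> R) : {within `[0, T], continuous (x i)} ->
      measurable_fun `[0, T] (u i) ->
      measurable_fun `[0, t] (fun s => - alpha * (x i s - xhat) - beta * u i s).
    move=> cx mu; apply: (measurable_funS (measurable_itv `[0, T]) (itv_sub tT)).
    apply: measurable_funB; apply: measurable_funM; (try exact: measurable_cst); (try exact: mu).
    apply: measurable_funB; [exact: cont_meas | exact: measurable_cst].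
  have bf (x u : 'I_N -> R -> R) : (forall t, t \in `[0, T] -> L <= x i t <= U) ->
      (forall t, t \in `[0, T] -> 0 <= u i t <= 1) ->
      forall s, s \in `[0, t] -> `|- alpha * (x i s - xhat) - beta * u i s| <=
         `|alpha| * (`|L| + `|U| + `|xhat|) + `|beta|.
    move=> bx bu s sin.
    have sT : s \in `[0, T] by apply: (itv_sub tT).
    have /andP[xl xu] := bx s sT; have /andP[ul uu] := bu s sT.
    apply: le_trans (ler_normB _ _) _; apply: lerD.
      rewrite normrM normrN ler_wpM2l //; apply: le_trans (ler_normB _ _) _.
      apply: lerD => //; rewrite ler_norml; apply/andP; split.
      - have := ler_norm L; have := ler_norm (- L); rewrite normrN.
        have := normr_ge0 U; lra.
      - have := ler_norm U; have := normr_ge0 L; lra.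
    by rewrite normrM ler_piMr // ger0_norm // (le_trans ul uu).
  have i1 : mu.-integrable `[0, t] (EFin \o f1).
    apply: bdd_int; [exact: (mf x1 u1 (c1 i) (m1 i)) | exact: (bf x1 u1 (l1' i) (b1 i))].
  have i2 : mu.-integrable `[0, t] (EFin \o f2).
    apply: bdd_int; [exact: (mf x2 u2 (c2 i) (m2 i)) | exact: (bf x2 u2 (l2' i) (b2 i))].
  have F1 : (\int[mu]_(s in `[0%R, t]) (f1 s)%:E)%E \is a fin_num.
    exact: (integrable_fin_num _ i1).
  have F2 : (\int[mu]_(s in `[0%R, t]) (f2 s)%:E)%E \is a fin_num.
    exact: (integrable_fin_num _ i2).
  have h1 : x1 i t = x0 i + fine (\int[mu]_(s in `[0%R, t]) (f1 s)%:E)%E.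
    by apply: EFin_inj; rewrite EFinD fineK //; exact: d1 i t tin.
  have h2 : x2 i t = x0 i + fine (\int[mu]_(s in `[0%R, t]) (f2 s)%:E)%E.
    by apply: EFin_inj; rewrite EFinD fineK //; exact: d2 i t tin.
  have -> : (\int[mu]_(s in `[0%R, t])
     (- alpha * (lam * x1 i s + (1 - lam) * x2 i s - xhat) -
      beta * (lam * u1 i s + (1 - lam) * u2 i s))%:E)%E =
     (\int[mu]_(s in `[0%R, t]) (lam * f1 s + (1 - lam) * f2 s)%:E)%E.
    by apply: eq_integral => s _; rewrite /f1 /f2; congr EFin; ring.
  rewrite int_lin // -(fineK F1) -(fineK F2) -!EFinM -!EFinD h1 h2.
  congr EFin; ring.
move=> j.
have tj : tau j.+1 <= T := tauT j (ltn_ord j).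
have isum (u : 'I_N -> R -> R) : (forall i, measurable_fun `[0, T] (u i)) ->
    (forall i t, t \in `[0, T] -> 0 <= u i t <= 1) ->
    mu.-integrable `[0, tau j.+1] (EFin \o (fun s => \sum_(i < N) u i s)).
  move=> mu bu; apply: (@bdd_int _ _ N%:R).
    apply: (measurable_funS (measurable_itv `[0, T]) (itv_sub tj)).
    by apply: measurable_sum => i; exact: mu.
  move=> s sin; have sT : s \in `[0, T] by apply: (itv_sub tj).
  apply: le_trans (ler_norm_sum _ _ _) _.
  apply: le_trans (_ : \sum_(i < N) `|u i s| <= \sum_(i < N) (1:R)) _; last first.
    by rewrite sumr_const card_ord.
  apply: ler_sum => i _.
  have /andP[p q] := bu i s sT; by rewrite ger0_norm.
have -> : (\int[mu]_(s in `[0%R, tau j.+1])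
     (\sum_(i < N) (lam * u1 i s + (1 - lam) * u2 i s))%:E)%E =
     (\int[mu]_(s in `[0%R, tau j.+1])
     (lam * (\sum_(i < N) u1 i s) + (1 - lam) * (\sum_(i < N) u2 i s))%:E)%E.
  by apply: eq_integral => s _; rewrite big_split /= !mulr_sumr.
rewrite int_lin //; [|exact: isum|exact: isum].
rewrite e1 e2 -!EFinM -EFinD; congr EFin.
by rewrite big_split /= -!mulr_sumr.
Qed.


Lemma int_bound {T C : R} {g : R -> R} : 0 < T -> 0 <= C ->
  mu.-integrable `[0, T] (EFin \o g) ->
  (forall x, x \in `[0, T] -> `|g x| <= C) ->
  exists r, (\int[mu]_(x in `[0%R, T]) (g x)%:E)%E = r%:E /\ - (C * T) <= r.
Proof.
move=> T0 C0 ig bg.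
have F : (\int[mu]_(x in `[0%R, T]) (g x)%:E)%E \is a fin_num.
  exact: (integrable_fin_num _ ig).
exists (fine (\int[mu]_(x in `[0%R, T]) (g x)%:E)%E); split; first by rewrite fineK.
have h1 := le_abse_integral mu (measurable_itv `[0, T]) (measurable_int _ ig).
have h2 : (\int[mu]_(x in `[0%R, T]) `|(g x)%:E| <= C%:E * mu `[0%R, T])%E.
  apply: integral_le_bound => //; first exact: (measurable_int _ ig).
  by apply: aeW => x Ax; rewrite /= lee_fin; apply: bg.
have h3 : (mu `[0%R, T] = T%:E)%E.
  have := @lebesgue_measure_itv R `[0, T]; rewrite /= => ->.
  by rewrite lte_fin T0 oppr0 adde0.
rewrite h3 -EFinM in h2.
have h4 := le_trans h1 h2.
rewrite -(fineK F) /= lee_fin in h4.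
by move: h4; rewrite ler_norml => /andP[].
Qed.


Lemma inf_fin (S : set (\bar R)) (B : R) z :
  (forall z, S z -> exists r, z = r%:E /\ - B <= r) -> S z ->
  ereal_inf S \is a fin_num.
Proof.
move=> lb Sz; rewrite fin_numElt; apply/andP; split.
  apply: lt_le_trans (_ : (- B)%:E <= _)%E; first exact: ltNyr.
  apply: le_ereal_inf_tmp => y Sy; have [r [-> h]] := lb y Sy.
  by rewrite lee_fin.
apply: le_lt_trans (ereal_inf_lbound Sz) _.
by have [r [-> _]] := lb z Sz; exact: ltry.
Qed.

Lemma inf_convex_gen (S1 S2 S : set (\bar R)) (B lam : R) :
  0 < lam < 1 ->
  (forall z, S1 z -> exists r, z = r%:E /\ - B <= r) ->
  (forall z, S2 z -> exists r, z = r%:E /\ - B <= r) ->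
  (forall r1 r2, S1 r1%:E -> S2 r2%:E -> S (lam * r1 + (1 - lam) * r2)%:E) ->
  (ereal_inf S <= lam%:E * ereal_inf S1 + (1 - lam)%:E * ereal_inf S2)%E.
Proof.
move=> /andP[l0 l1] lb1 lb2 mix.
have ge (S' : set (\bar R)) : (forall z, S' z -> exists r, z = r%:E /\ - B <= r) ->
    ((- B)%:E <= ereal_inf S')%E.
  move=> lb; apply: le_ereal_inf_tmp => y Sy; have [r [-> h]] := lb y Sy.
  by rewrite lee_fin.
have [[z1 Sz1]|S10] := pselect (exists z, S1 z); last first.
  have -> : S1 = set0 by apply/seteqP; split => z // Sz; apply: S10; exists z.
  rewrite ereal_inf0 gt0_muley ?lte_fin // addye ?leey //.
  have := ge S2 lb2; case: (ereal_inf S2) => // _.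
  by rewrite gt0_muley // lte_fin subr_gt0.
have [[z2 Sz2]|S20] := pselect (exists z, S2 z); last first.
  have -> : S2 = set0 by apply/seteqP; split => z // Sz; apply: S20; exists z.
  rewrite ereal_inf0 gt0_muley ?lte_fin ?subr_gt0 // addey ?leey //.
  have := ge S1 lb1; case: (ereal_inf S1) => // _.
  by rewrite gt0_muley.
have F1 := @inf_fin S1 B z1 lb1 Sz1; have F2 := @inf_fin S2 B z2 lb2 Sz2.
rewrite -(fineK F1) -(fineK F2).
set v1 := fine (ereal_inf S1); set v2 := fine (ereal_inf S2).
apply/lee_addgt0Pr => e e0.
have [y1 Sy1 hy1] := lb_ereal_inf_adherent e0 F1.
have [y2 Sy2 hy2] := lb_ereal_inf_adherent e0 F2.
have [r1 [ey1 _]] := lb1 y1 Sy1; have [r2 [ey2 _]] := lb2 y2 Sy2.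
rewrite ey1 -(fineK F1) -/v1 -EFinD lte_fin in hy1.
rewrite ey2 -(fineK F2) -/v2 -EFinD lte_fin in hy2.
rewrite ey1 in Sy1; rewrite ey2 in Sy2.
apply: le_trans (ereal_inf_lbound (mix _ _ Sy1 Sy2)) _.
rewrite -!EFinM -!EFinD lee_fin; nra.
Qed.


Lemma cost_int {N M : nat} {T alpha beta L U xhat : R} {x0 : 'I_N -> R}
  {tau : nat -> R} {E : 'I_M -> R} {pp : R -> R} {P : R} {u : 'I_N -> R -> R} :
  measurable_fun `[0, T] pp -> (forall t, t \in `[0, T] -> `|pp t| <= P) ->
  feasible N M T alpha beta L U xhat x0 tau E u ->
  mu.-integrable `[0, T] (EFin \o (fun t => pp t * \sum_(i < N) u i t)) /\
  (forall t, t \in `[0, T] -> `|pp t * \sum_(i < N) u i t| <= P * N%:R).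
Proof.
move=> mpi bpi [mu [bu _]].
have bd : forall t, t \in `[0, T] -> `|pp t * \sum_(i < N) u i t| <= P * N%:R.
  move=> t tin; rewrite normrM; apply: ler_pM => //.
    exact: bpi.
  apply: le_trans (ler_norm_sum _ _ _) _.
  apply: le_trans (_ : \sum_(i < N) `|u i t| <= \sum_(i < N) (1:R)) _; last first.
    by rewrite sumr_const card_ord.
  apply: ler_sum => i _.
  by have /andP[p q] := bu i t tin; rewrite ger0_norm.
split => //; apply: bdd_int bd.
apply: measurable_funM => //; exact: measurable_sum.
Qed.

End H.

Theorem proposition3 (R : realType) (N M : nat) (T Etot alpha beta L U xhat : R)
    (x0 : 'I_N -> R) (pi : R -> R) (tau : nat -> R) :
  (0 < N)%N -> (0 < M)%N -> 0 < T -> 0 < Etot -> 0 < alpha -> L < U ->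
  U < xhat ->
  (forall i, L <= x0 i <= U) ->
  tau 0%N = 0 -> tau M = T ->
  (forall j, (j < M)%N -> tau j < tau j.+1) ->
  (forall j, (j < M)%N ->
     {in `[tau j, tau j.+1] &, {homo pi : s t / s <= t}} \/
     {in `[tau j, tau j.+1] &, {homo pi : s t / t <= s}}) ->
  forall (lam : R) (E1 E2 : 'I_M -> R),
    0 <= lam <= 1 ->
    admissible N M Etot alpha beta L U xhat tau E1 ->
    admissible N M Etot alpha beta L U xhat tau E2 ->
    (value N M T alpha beta L U xhat x0 pi tau (fun j => (lam * E1 j + (1 - lam) * E2 j)%R)
      <= lam%:E * value N M T alpha beta L U xhat x0 pi tau E1
         + (1 - lam)%:E * value N M T alpha beta L U xhat x0 pi tau E2)%E.
Proof.
move=> N0 M0 T0 _ _ _ _ _ tau0 tauM inc hh lam E1 E2 lam01 _ _.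
have tauT : forall j, (j < M)%N -> tau j.+1 <= T.
  by move=> j jM; rewrite -tauM; apply: (tau_mono _ _ inc j.+1 M); rewrite jM leqnn.
have pim : measurable_fun `[0, T] pi.
  by have := pi_meas _ _ _ inc hh M (leqnn M); rewrite tau0 tauM.
set P := \sum_(j < M) (`|pi (tau j)| + `|pi (tau j.+1)|).
have P0 : 0 <= P by apply: sumr_ge0 => j _; rewrite addr_ge0.
have pib : forall t, t \in `[0, T] -> `|pi t| <= P.
  by move=> t; rewrite -tau0 -tauM => tin; exact: (pi_bound _ _ _ M0 inc hh t tin).
have lb : forall E z, [set z | exists u, feasible N M T alpha beta L U xhat x0 tau E u
                              /\ z = cost N T pi u] z ->
    exists r, z = r%:E /\ - (P * N%:R * T) <= r.
  move=> E z [u [fu ->]].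
  have [iu bu] := cost_int pim pib fu.
  have [r [er hr]] := int_bound T0 (mulr_ge0 P0 (ler0n _ _)) iu bu.
  by exists r; split.
case/andP: lam01 => l0 l1.
have [->|lne0] := eqVneq lam 0.
  have -> : (fun j => 0 * E1 j + (1 - 0) * E2 j) = E2.
    by apply/funext => j; rewrite mul0r add0r subr0 mul1r.
  by rewrite mul0e add0e subr0 mul1e.
have [->|lne1] := eqVneq lam 1.
  have -> : (fun j => 1 * E1 j + (1 - 1) * E2 j) = E1.
    by apply/funext => j; rewrite mul1r subrr mul0r addr0.
  by rewrite subrr mul0e adde0 mul1e.
apply: inf_convex_gen; [|exact: lb|exact: lb|].
  by rewrite lt_neqAle eq_sym lne0 l0 /= lt_neqAle lne1 l1.
move=> r1 r2 [u1 [f1 c1]] [u2 [f2 c2]].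
exists (fun i t => lam * u1 i t + (1 - lam) * u2 i t); split.
  by apply: feas_mix => //; rewrite l0 l1.
have [i1 _] := cost_int pim pib f1; have [i2 _] := cost_int pim pib f2.
rewrite /cost.
have -> : (\int[lebesgue_measure]_(t in `[0%R, T])
     (pi t * \sum_(i < N) (lam * u1 i t + (1 - lam) * u2 i t))%:E)%E =
  (\int[lebesgue_measure]_(t in `[0%R, T])
     (lam * (pi t * \sum_(i < N) u1 i t) + (1 - lam) * (pi t * \sum_(i < N) u2 i t))%:E)%E.
  apply: eq_integral => t _; congr EFin.
  by rewrite big_split /= -!mulr_sumr; ring.
rewrite int_lin //.
by rewrite /cost in c1 c2; rewrite -c1 -c2 -!EFinM -EFinD.
Qed.
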